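(* Let $d\ge 1$ and let $J$ be a positive semi-definite $d^2\times d^2$ complex matrix. Write $d\cdot J$ in block form with $d\times d$ blocks, $d\cdot J=[M^{ij}]_{i,j=1}^d$, and let $D^i=M^{ii}$ ($i=1,\dots,d$) be its diagonal blocks. Then $$\frac{1}{d}\sum_{i=1}^d\boldsymbol{\lambda}(D^i)\succ\boldsymbol{\lambda}(J),$$ where each vector $\boldsymbol{\lambda}(D^i)\in\mathbb{R}^d$ is padded with $d(d-1)$ zeros to have length $d^2$.
   Context: For a Hermitian matrix $X$, $\boldsymbol{\lambda}(X)$ denotes the vector of eigenvalues of $X$ arranged in non-increasing order. For real vectors $x,y$ of the same length $n$, $x\succ y$ ($x$ majorizes $y$) means $\sum_{i=1}^k x_i^\downarrow\ge\sum_{i=1}^k y_i^\downarrow$ for all $k\in\{1,\dots,n\}$, where $x^\downarrow$ is the rearrangement of $x$ in non-increasing order. *)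

(* Defs.v *)
(* Complex numbers are modelled by an arbitrary
   numClosedFieldType C (e.g. algC, or complex R for a real closed R),
   as in MathComp's spectral.v. *)
From HB Require Import structures.
From mathcomp Require Import all_boot all_order all_algebra.
From mathcomp Require Import sesquilinear spectral.
From mathcomp Require Import zify.
Set Implicit Arguments. Unset Strict Implicit. Unset Printing Implicit Defensive.
Import Order.TTheory GRing.Theory Num.Theory Num.Def.
Local Open Scope ring_scope.

Definition psdmx {C : numClosedFieldType} n (J : 'M[C]_n) : Prop :=
  J \is hermsymmx /\
  forall v : 'rV[C]_n, 0 <= (v *m J *m (map_mx conjC v)^T) 0 0.

Definition eigvals {C : numClosedFieldType} n (X : 'M[C]_n) : seq C :=
  sort (fun a b : C => b <= a) [seq spectral_diag X 0 i | i : 'I_n].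

Definition majorizes {C : numClosedFieldType} (x y : seq C) : Prop :=
  size x = size y /\
  forall k : nat, (k <= size x)%N ->
    \sum_(i < k) (sort (fun a b : C => b <= a) y)`_i <=
    \sum_(i < k) (sort (fun a b : C => b <= a) x)`_i.

(* index of entry (a,b) of block (i,j) in a d^2 x d^2 matrix: row i*d + a *)
Lemma blk_idx_proof (d : nat) (i a : 'I_d) : (i * d + a < d * d)%N.
Proof.
have hi := ltn_ord i; have ha := ltn_ord a.
have : (i.+1 * d <= d * d)%N by rewrite leq_mul2r hi orbT.
rewrite mulSn; lia.
Qed.

Definition blk_idx (d : nat) (i a : 'I_d) : 'I_(d * d) :=
  Ordinal (blk_idx_proof i a).

Definition block_of {C : numClosedFieldType} (d : nat) (A : 'M[C]_(d * d))
  (i j : 'I_d) : 'M[C]_d :=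
  \matrix_(a < d, b < d) A (blk_idx i a) (blk_idx j b).

Definition pad0 {C : numClosedFieldType} (m : nat) (s : seq C) : seq C :=
  s ++ nseq (m - size s) 0.

(* Main.v *)
Require Import Defs.
From HB Require Import structures.
From mathcomp Require Import all_boot all_order all_algebra all_fingroup.
From mathcomp Require Import sesquilinear spectral ring.
From mathcomp Require Import zify.
Set Implicit Arguments. Unset Strict Implicit. Unset Printing Implicit Defensive.
Import Order.TTheory GRing.Theory Num.Theory.
Local Open Scope ring_scope.
Local Open Scope sesquilinear_scope.
Lemma sandwichE {C : numClosedFieldType} m n (U : 'M[C]_(m, n)) (s : 'rV[C]_m) x z :
  (U^t* *m diag_mx s *m U) x z = \sum_i (U i x)^* * s 0 i * U i z.
Proof.
rewrite mul_mx_diag !mxE; apply: eq_bigr => i _; rewrite !mxE.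
by [].
Qed.

Lemma unitary_tr {C : numClosedFieldType} n (P : 'M[C]_n) :
  P \is unitarymx -> P^t* *m P = 1%:M.
Proof.
by move=> PU; rewrite -invmx_unitary // mulVmx // unitarymx_unit.
Qed.

Lemma unitary_entry {C : numClosedFieldType} m n (P : 'M[C]_(m, n)) x z :
  P \is unitarymx -> \sum_j P x j * (P z j)^* = (x == z)%:R.
Proof.
move=> /unitarymxP /matrixP /(_ x z); rewrite !mxE => <-.
by apply: eq_bigr => j _; rewrite !mxE.
Qed.


Lemma eigvals_decomp {C : numClosedFieldType} n (A : 'M[C]_n) :
  A \is hermsymmx -> exists2 Q : 'M[C]_n, Q \is unitarymx &
    A = Q^t* *m diag_mx (\row_i (eigvals A)`_i) *m Q.
Proof.
move=> Ah; have /orthomx_spectralP AE := hermitian_normalmx Ah.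
set P := spectralmx A in AE; set sp := spectral_diag A in AE.
have PU : P \is unitarymx by apply: spectral_unitarymx.
have : perm_eq (eigvals A) [tuple sp 0 i | i < n] by rewrite /eigvals perm_sort.
move=> /tuple_permP [p Ep].
exists (\matrix_(i, j) P (p i) j).
  apply/unitarymxP/matrixP => x z; rewrite !mxE.
  have := unitary_entry (p x) (p z) PU; rewrite (inj_eq perm_inj) => <-.
  by apply: eq_bigr => j _; rewrite !mxE.
apply/matrixP => x z; rewrite sandwichE {1}AE invmx_unitary // sandwichE.
rewrite (reindex_inj (@perm_inj _ p)) /=; apply: eq_bigr => i _; rewrite !mxE Ep.
by rewrite -(tnth_nth 0) !tnth_mktuple.
Qed.

Lemma sum_blk {R : nmodType} d (hd : (0 < d)%N) (F : 'I_(d * d) -> R) :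
  \sum_(c < d * d) F c = \sum_(i < d) \sum_(b < d) F (blk_idx i b).
Proof.
rewrite pair_big /=.
have hq (c : 'I_(d * d)) : (c %/ d < d)%N by rewrite ltn_divLR // ltn_ord.
have hr (c : 'I_(d * d)) : (c %% d < d)%N by rewrite ltn_pmod.
pose g (c : 'I_(d * d)) := (Ordinal (hq c), Ordinal (hr c)).
rewrite (reindex (fun p : 'I_d * 'I_d => blk_idx p.1 p.2)) //.
exists g => [[i b]|c] _.
  rewrite /g; congr pair; apply: val_inj => /=.
    by rewrite divnMDl // divn_small // addn0.
  by rewrite modnMDl modn_small.
by apply: val_inj => /=; rewrite -divn_eq.
Qed.

Lemma eigvals_size {C : numClosedFieldType} n (A : 'M[C]_n) : size (eigvals A) = n.
Proof. by rewrite /eigvals size_sort size_map size_enum_ord. Qed.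

Lemma eigvals_real {C : numClosedFieldType} n (A : 'M[C]_n) :
  A \is hermsymmx -> all (fun x => x \is Num.real) (eigvals A).
Proof.
move=> /hermitian_spectral_diag_real /mxOverP Hr.
apply/allP => x; rewrite /eigvals mem_sort => /mapP [i _ ->]; exact: Hr.
Qed.

Lemma eigvals_sorted {C : numClosedFieldType} n (A : 'M[C]_n) :
  A \is hermsymmx -> sorted (fun a b : C => b <= a) (eigvals A).
Proof.
move=> Ah; rewrite /eigvals; apply: (sort_sorted_in (P := Num.real)).
  by move=> x y xr yr /=; rewrite real_leVge.
by have := eigvals_real Ah; rewrite /eigvals all_sort.
Qed.

Lemma eig_dec {C : numClosedFieldType} n (A : 'M[C]_n) :
  A \is hermsymmx -> (forall a : 'I_n, 0 <= (eigvals A)`_a) ->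
  forall a b : nat, (a <= b)%N -> (eigvals A)`_b <= (eigvals A)`_a.
Proof.
move=> Ah A0 a b hab.
case: (ltnP b n) => hb; last first.
  rewrite [X in X <= _]nth_default ?eigvals_size //.
  case: (ltnP a n) => ha; first by apply: (A0 (Ordinal ha)).
  by rewrite nth_default ?eigvals_size.
have tr : transitive (fun a b : C => b <= a) by move=> x y z /= h1 h2; apply: le_trans h2 h1.
have := sorted_leq_nth tr (fun x : C => lexx x) 0 (eigvals_sorted Ah).
apply; rewrite ?inE ?eigvals_size //; exact: leq_ltn_trans hab hb.
Qed.
Lemma trCE {C : numClosedFieldType} m n (M : 'M[C]_(m, n)) i j : (M^t*) i j = (M j i)^*.
Proof. by rewrite !mxE. Qed.

Lemma trC_mul {C : numClosedFieldType} m n p (A : 'M[C]_(m, n)) (B : 'M[C]_(n, p)) :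
  (A *m B)^t* = B^t* *m A^t*.
Proof. by rewrite trmx_mul map_mxM. Qed.

Lemma gram_herm {C : numClosedFieldType} n d (G : 'M[C]_(n, d)) :
  (d%:R *: (G^t* *m G)) \is hermsymmx.
Proof.
apply/sesquiP; rewrite expr0 scale1r.
apply/matrixP => i j; rewrite !mxE /= rmorphM /= conjC_nat rmorph_sum; congr (_ * _).
by apply: eq_bigr => c _; rewrite !mxE rmorphM /= conjCK mulrC.
Qed.

Lemma key_ineq {C : numDomainType} N (mu : seq C) (w : 'I_N -> C) k :
  size mu = N ->
  (forall a b : nat, (a <= b)%N -> mu`_b <= mu`_a) ->
  (forall b, 0 <= w b <= 1) ->
  \sum_b w b <= k%:R ->
  \sum_(b < N) mu`_b * w b <= \sum_(b < k) mu`_b.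
Proof.
move=> smu mudec w01 sw.
have mu0 : forall a, 0 <= mu`_a.
  by move=> a; have := mudec a (a + N)%N (leq_addr _ _); rewrite nth_default // smu leq_addl.
case: (leqP N k) => hk.
  have -> : \sum_(b<k) mu`_b = \sum_(b<N) mu`_b.
    rewrite (big_ord_widen k (fun b => mu`_b) hk) (bigID (fun b : 'I_k => (b<N)%N)) /=.
    rewrite [X in _ + X]big1 ?addr0 //.
    by move=> b; rewrite -leqNgt => hb; rewrite nth_default // smu.
  apply: ler_sum => b _.
  have /andP[w0 w1] := w01 b.
  by rewrite -[X in _ <= X]mulr1 ler_wpM2l.
rewrite (big_ord_widen N (fun b => mu`_b) (ltnW hk)) /=.
set t := mu`_k.
rewrite -subr_le0 [X in _ - X]big_mkcond /= -sumrB.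
have H : forall b : 'I_N, mu`_b * w b - (if (b < k)%N then mu`_b else 0) <= t * (w b - (b < k)%:R).
  move=> b; have /andP[w0 w1] := w01 b.
  case: (ltnP b k) => hb /=.
    rewrite -[X in _ - X]mulr1 -mulrBr -subr_ge0 -mulrBl mulr_le0 //.
      by rewrite subr_le0 mudec // ltnW.
    by rewrite subr_le0.
  by rewrite !subr0 ler_wpM2r // mudec.
apply: (le_trans (ler_sum _ (fun b _ => H b))).
rewrite -mulr_sumr sumrB mulr_ge0_le0 //.
by rewrite mu0.
rewrite subr_le0 (le_trans sw) //.
rewrite (eq_bigr (fun b : 'I_N => if (b < k)%N then 1 else 0)); last by move=> b _; case: ifP.
by rewrite -big_mkcond -(big_ord_widen N (fun b => 1 : C) (ltnW hk)) sumr_const card_ord.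
Qed.

Lemma block_facts {C : numClosedFieldType} n d (hd : (0 < d)%N) (Gi : 'M[C]_(n, d)) :
  let mu := eigvals (d%:R *: (Gi^t* *m Gi)) in
  exists H : 'M[C]_(n, d),
    [/\ forall b b', \sum_a (H a b)^* * H a b' = (b == b')%:R * (d%:R^-1 * mu`_b),
        forall a, \sum_b H a b * (H a b)^* = \sum_b Gi a b * (Gi a b)^* &
        forall b : 'I_d, 0 <= mu`_b].
Proof.
move=> mu.
have [Q QU DE] := eigvals_decomp (gram_herm Gi).
have QU' := unitary_tr QU.
have d0 : d%:R != 0 :> C by rewrite pnatr_eq0 -lt0n.
exists (Gi *m Q^t*).
have F1 : (Gi *m Q^t*)^t* *m (Gi *m Q^t*) = d%:R^-1 *: diag_mx (\row_b mu`_b).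
  rewrite trC_mul trmxCK !mulmxA -[Q *m _ *m Gi]mulmxA.
  have -> : Gi^t* *m Gi = d%:R^-1 *: (d%:R *: (Gi^t* *m Gi)) by rewrite scalerA mulVf // scale1r.
  rewrite DE -/mu -scalemxAr -scalemxAl !mulmxA (unitarymxP QU) mul1mx.
  by rewrite -mulmxA (unitarymxP QU) mulmx1.
have F1' : forall b b', \sum_a ((Gi *m Q^t*) a b)^* * (Gi *m Q^t*) a b' = (b == b')%:R * (d%:R^-1 * mu`_b).
  move=> b b'; have /matrixP /(_ b b') := F1; rewrite !mxE mulrnAr -mulr_natl => <-.
  by apply: eq_bigr => a _; rewrite !mxE.
split => //.
- move=> a; have : (Gi *m Q^t*) *m (Gi *m Q^t*)^t* = Gi *m Gi^t*.
    by rewrite trC_mul trmxCK -mulmxA [Q^t* *m _]mulmxA QU' mul1mx.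
  move=> /matrixP /(_ a a); rewrite !mxE => E.
  transitivity (\sum_j ((Gi *m Q^t*) a j * ((Gi *m Q^t*)^t*) j a)).
    by apply: eq_bigr => b _; rewrite trCE.
  by rewrite E; apply: eq_bigr => b _; rewrite trCE.
- move=> b; have := F1' b b; rewrite eqxx mul1r => E.
  have : 0 <= d%:R^-1 * mu`_b.
    by rewrite -E; apply: sumr_ge0 => a _; rewrite mulrC mul_conjC_ge0.
  by rewrite pmulr_rge0 // invr_gt0 ltr0n.
Qed.

Lemma bessel_bound {C : numClosedFieldType} n d (hd : (0 < d)%N) k (hk : (k <= n)%N)
  (H : 'M[C]_(n, d)) (mu : seq C) :
  size mu = d ->
  (forall a b : nat, (a <= b)%N -> mu`_b <= mu`_a) ->
  (forall b b', \sum_a (H a b)^* * H a b' = (b == b')%:R * (d%:R^-1 * mu`_b)) ->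
  \sum_(a < n | (a < k)%N) \sum_b H a b * (H a b)^* <= d%:R^-1 * \sum_(b < k) mu`_b.
Proof.
move=> smu mudec F1.
have mu0 : forall a, 0 <= mu`_a.
  by move=> a; have := mudec a (a + d)%N (leq_addr _ _); rewrite nth_default // smu leq_addl.
have d0 : d%:R != 0 :> C by rewrite pnatr_eq0 -lt0n.
have dp : 0 < d%:R :> C by rewrite ltr0n.
pose nu (b : 'I_d) : C := if mu`_b == 0 then 0 else d%:R / mu`_b.
have nu0 b : 0 <= nu b.
  by rewrite /nu; case: eqP => // _; rewrite divr_ge0 // ltW.
have colE b : \sum_a H a b * (H a b)^* = d%:R^-1 * mu`_b.
  by have := F1 b b; rewrite eqxx mul1r => <-; apply: eq_bigr => a _; rewrite mulrC.
pose ps b := \sum_(a < n | (a < k)%N) H a b * (H a b)^*.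
have ps0 b : 0 <= ps b by apply: sumr_ge0 => a _; rewrite mul_conjC_ge0.
have psle b : ps b <= d%:R^-1 * mu`_b.
  rewrite -colE (bigID (fun a : 'I_n => (a < k)%N)) /= lerDl.
  by apply: sumr_ge0 => a _; rewrite mul_conjC_ge0.
pose w b := nu b * ps b.
have psE b : ps b = d%:R^-1 * mu`_b * w b.
  rewrite /w /nu; case: eqP => [m0|mu_ne0].
    rewrite !mul0r mulr0; apply/le_anti; rewrite (ps0 b) andbT.
    by have := psle b; rewrite m0 mulr0.
  by field; apply/andP; split => //; apply/eqP.
have w0 b : 0 <= w b by rewrite mulr_ge0.
have w1 b : w b <= 1.
  rewrite /w /nu; case: eqP => [_|mu_ne0]; first by rewrite mul0r ler01.
  apply: (le_trans (ler_wpM2l _ (psle b))); first by rewrite divr_ge0 // ltW.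
  rewrite le_eqVlt; apply/orP; left; apply/eqP; field.
  by apply/andP; split => //; apply/eqP.
have HH : H^t* *m H = diag_mx (\row_b (d%:R^-1 * mu`_b)).
  apply/matrixP => b b'; rewrite !mxE.
  rewrite (eq_bigr (fun a => (H a b)^* * H a b')); last by move=> a _; rewrite trCE.
  by rewrite F1 mulr_natl.
pose Pi := H *m diag_mx (\row_b nu b) *m H^t*.
have PiE a c : Pi a c = \sum_b H a b * nu b * (H c b)^*.
  by rewrite /Pi mul_mx_diag !mxE; apply: eq_bigr => b _; rewrite !mxE.
have PP : Pi *m Pi = Pi.
  rewrite /Pi !mulmxA -[_ *m H^t* *m H]mulmxA HH -[_ *m diag_mx _ *m diag_mx _]mulmxA.
  rewrite mulmx_diag -[H *m _ *m _]mulmxA mulmx_diag; congr (_ *m diag_mx _ *m _).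
  apply/matrixP => i b; rewrite !mxE /nu; case: eqP => [_|m0]; first by rewrite !mul0r.
  by field; apply/andP; split => //; apply/eqP.
have Pi_le1 a : Pi a a <= 1.
  have Pa0 : 0 <= Pi a a.
    by rewrite PiE; apply: sumr_ge0 => b _; rewrite -mulrA mulrC -mulrA mulr_ge0 // mulrC mul_conjC_ge0.
  have herm c : Pi c a = (Pi a c)^*.
    rewrite !PiE rmorph_sum; apply: eq_bigr => b _.
    by rewrite !rmorphM /= conjCK (geC0_conj (nu0 b)) -mulrA mulrC [nu b * _]mulrC.
  have : Pi a a * Pi a a <= Pi a a.
    have Ps : Pi a a = \sum_c Pi a c * Pi c a.
      by rewrite -[in LHS]PP [LHS]mxE.
    rewrite [X in _ <= X]Ps (bigD1 a) //= -[X in X <= _]addr0 lerD2l.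
    apply: sumr_ge0 => c _; rewrite herm mul_conjC_ge0 //.
  move=> h; have [->|pn0] := eqVneq (Pi a a) 0; first by rewrite ler01.
  have pp : 0 < Pi a a by rewrite lt_def pn0 Pa0.
  by rewrite -(ler_pM2l pp) mulr1.
have sw : \sum_b w b <= k%:R.
  have -> : \sum_b w b = \sum_(a < n | (a < k)%N) Pi a a.
    rewrite (eq_bigr (fun b => \sum_(a < n | (a < k)%N) H a b * nu b * (H a b)^*)).
      by rewrite exchange_big /=; apply: eq_bigr => a _; rewrite PiE.
    move=> b _; rewrite /w /ps mulr_sumr; apply: eq_bigr => a _.
    by rewrite mulrA [nu b * _]mulrC.
  apply: (le_trans (ler_sum _ (fun a _ => Pi_le1 a))).
  by rewrite -(big_ord_widen n (fun _ => 1 : C) hk) sumr_const card_ord.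
have -> : \sum_(a < n | (a < k)%N) \sum_b H a b * (H a b)^* = d%:R^-1 * \sum_(b < d) mu`_b * w b.
  rewrite exchange_big /= mulr_sumr; apply: eq_bigr => b _ /=.
  by rewrite mulrA -psE.
rewrite ler_wpM2l ?invr_ge0 ?ler0n //.
by apply: key_ineq => // b; rewrite w0 w1.
Qed.

Lemma block_bound {C : numClosedFieldType} n d (hd : (0 < d)%N) k (hk : (k <= n)%N)
  (Gi : 'M[C]_(n, d)) :
  \sum_(a < n | (a < k)%N) \sum_b Gi a b * (Gi a b)^* <=
  d%:R^-1 * \sum_(b < k) (eigvals (d%:R *: (Gi^t* *m Gi)))`_b.
Proof.
have [H [F1 F2 F3]] := block_facts hd Gi.
rewrite (eq_bigr (fun a => \sum_b H a b * (H a b)^*)); last by move=> a _; rewrite F2.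
apply: bessel_bound => //; first by rewrite eigvals_size.
exact: eig_dec (gram_herm Gi) F3.
Qed.

Lemma gram_dec {C : numClosedFieldType} n d (hd : (0 < d)%N) (Gi : 'M[C]_(n, d)) :
  forall a b : nat, (a <= b)%N -> (eigvals (d%:R *: (Gi^t* *m Gi)))`_b <= (eigvals (d%:R *: (Gi^t* *m Gi)))`_a.
Proof.
have [H [F1 F2 F3]] := block_facts hd Gi.
exact: eig_dec (gram_herm Gi) F3.
Qed.

Lemma pad0_nth {C : numClosedFieldType} m (s : seq C) a : (pad0 m s)`_a = s`_a.
Proof.
rewrite /pad0 nth_cat; case: ltnP => // h.
by rewrite nth_nseq nth_default //; case: ifP.
Qed.

Lemma psd_eig_ge0 {C : numClosedFieldType} n (J P : 'M[C]_n) (s : 'rV[C]_n) :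
  psdmx J -> P \is unitarymx -> J = P^t* *m diag_mx s *m P -> forall a, 0 <= s 0 a.
Proof.
move=> [_ hJ] PU JE a; have := hJ (row a P).
rewrite map_trmx JE.
have -> : row a P *m (P^t* *m diag_mx s *m P) *m (row a P)^t* =
  row a 1%:M *m diag_mx s *m (row a 1%:M)^t*.
  rewrite !mulmxA -row_mul (unitarymxP PU) -!mulmxA; congr (_ *m (_ *m _)).
  by rewrite -[in RHS](unitarymxP PU) row_mul trC_mul trmxCK.
have E : (row a (1%:M : 'M[C]_n) *m diag_mx s *m (row a 1%:M)^t*) 0 0 = s 0 a.
  rewrite mxE (bigD1 a) //= big1 ?addr0.
    by rewrite trCE mul_mx_diag !mxE eqxx /= mulr1n mul1r conjC1 mulr1.
  by move=> j ja; rewrite trCE !mxE eq_sym (negbTE ja) /= mulr0n conjC0 mulr0.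
by rewrite E.
Qed.

Theorem theorem1 (C : numClosedFieldType) (d : nat) (hd : (1 <= d)%N)
  (J : 'M[C]_(d * d)) (hJ : psdmx J) :
  let M := block_of (d%:R *: J) in
  let D := fun i : 'I_d => M i i in
  majorizes
    (mkseq (fun k => d%:R^-1 * \sum_(i < d) (pad0 (d * d) (eigvals (D i)))`_k)
       (d * d))
    (eigvals J).
Proof.
move=> M D.
have Jh := hJ.1.
have [P PU JE] := eigvals_decomp Jh.
set y := eigvals J in JE *.
have y0 : forall a : 'I_(d * d), 0 <= y`_a.
  by move=> a; have := psd_eig_ge0 hJ PU JE a; rewrite mxE.
have ydec := eig_dec Jh y0.
pose r (a : 'I_(d * d)) := sqrtC y`_a.
have r0 a : 0 <= r a by rewrite sqrtC_ge0.
pose G := diag_mx (\row_a r a) *m P.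
have GE c x : G c x = r c * P c x by rewrite /G mul_diag_mx !mxE.
have JG x z : J x z = \sum_c (G c x)^* * G c z.
  rewrite JE sandwichE; apply: eq_bigr => c _; rewrite !GE !mxE rmorphM /=.
  rewrite -[y`_c]sqrtCK -/(r c) (geC0_conj (r0 c)); ring.
have rowG a : \sum_c G a c * (G a c)^* = y`_a.
  transitivity (r a * r a * \sum_c P a c * (P a c)^*).
    rewrite mulr_sumr; apply: eq_bigr => j _; rewrite GE rmorphM /= (geC0_conj (r0 a)).
    ring.
  by rewrite unitary_entry // eqxx mulr1 -expr2 sqrtCK.
pose Gi (i : 'I_d) := \matrix_(a < d * d, b < d) G a (blk_idx i b).
have Dblk i : D i = d%:R *: ((Gi i)^t* *m Gi i).
  apply/matrixP => a b; rewrite /D /M /block_of !mxE JG; congr (_ * _).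
  by apply: eq_bigr => c _; rewrite !mxE.
split; first by rewrite size_mkseq eigvals_size.
rewrite size_mkseq => k hk.
set x := mkseq _ _.
have xE a : (a < d * d)%N -> x`_a = d%:R^-1 * \sum_(i < d) (eigvals (D i))`_a.
  by move=> ha; rewrite nth_mkseq //; congr (_ * _); apply: eq_bigr => i _; rewrite pad0_nth.
have tr : transitive (fun a b : C => b <= a) by move=> u v w /= h1 h2; apply: le_trans h2 h1.
have -> : sort (fun a b : C => b <= a) y = y by exact: (sorted_sort tr (eigvals_sorted Jh)).
have -> : sort (fun a b : C => b <= a) x = x.
  apply: (sorted_sort tr); apply/(sortedP 0) => i; rewrite size_mkseq => hi.
  rewrite !xE ?(ltnW hi) // ler_wpM2l ?invr_ge0 ?ler0n //.
  by apply: ler_sum => j _; rewrite Dblk; apply: gram_dec.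
rewrite [X in _ <= X](eq_bigr (fun a : 'I_k => d%:R^-1 * \sum_(i < d) (eigvals (D i))`_a)); last first.
  by move=> a _; rewrite xE // (leq_trans (ltn_ord a) hk).
rewrite -mulr_sumr exchange_big /=.
rewrite (big_ord_widen (d * d) (fun a => y`_a) hk).
rewrite (eq_bigr (fun a => \sum_i \sum_b Gi i a b * (Gi i a b)^*)); last first.
  move=> a _; rewrite -rowG (sum_blk hd); apply: eq_bigr => i _; apply: eq_bigr => b _.
  by rewrite !mxE.
rewrite exchange_big /= mulr_sumr; apply: ler_sum => i _; rewrite Dblk; exact: block_bound.
Qed.
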